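(* Fix $\eta>0$ and $u\in\mathbb{R}^d$. Let $C=\{1,\dots,m\}$ be a set of $m\ge1$ rollouts, each with verifier reward $r_i=1$, whose reward-weighted embeddings are all identical: $\tilde z_i=u$ for all $i\in C$. Define the team value on subsets $S\subseteq C$ by $v(\emptyset)=0$ and $v(S)=\log\det(I_{|S|}+\eta L_S)$, where $L_S=(\langle\tilde z_j,\tilde z_k\rangle)_{j,k\in S}$. Let $\phi_i$ denote the Shapley value of player $i$ in the cooperative game $(C,v)$, i.e. $$\phi_i=\sum_{S\subseteq C\setminus\{i\}}\frac{|S|!\,(m-|S|-1)!}{m!}\left[v(S\cup\{i\})-v(S)\right].$$ Then for every $i\in C$, $$\phi_i=\frac{1}{m}\log\left(1+\eta m\|u\|_2^2\right).$$
   Context: In the paper, $\tilde z_i=r_i\bar z_i$ where $r_i$ is the binary verifier reward and $\bar z_i$ the unit-normalized semantic embedding of a sampled response; ''verifier-correct'' means $r_i=1$. *)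

(* Defs.v *)
From mathcomp Require Import all_boot all_order all_algebra.
From mathcomp Require Import all_classical all_reals all_analysis.
Set Implicit Arguments. Unset Strict Implicit. Unset Printing Implicit Defensive.
Import Order.TTheory GRing.Theory Num.Theory.
Local Open Scope ring_scope.

Definition dotv (R : realType) (d : nat) (x y : 'rV[R]_d) : R :=
  \sum_(k < d) x ord0 k * y ord0 k.

Definition sqnorm (R : realType) (d : nat) (x : 'rV[R]_d) : R := dotv x x.

Definition gramS (R : realType) (d m : nat) (z : 'I_m -> 'rV[R]_d)
  (S : {set 'I_m}) : 'M[R]_#|S| :=
  \matrix_(j < #|S|, k < #|S|) dotv (z (enum_val j)) (z (enum_val k)).

Definition team_value (R : realType) (d m : nat) (eta : R)
  (z : 'I_m -> 'rV[R]_d) (S : {set 'I_m}) : R :=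
  if (#|S| == 0)%N then 0
  else ln (\det (1%:M + eta *: gramS z S)).

Definition shapley (R : realType) (m : nat) (v : {set 'I_m} -> R) (i : 'I_m) : R :=
  \sum_(S : {set 'I_m} | i \notin S)
    ((#|S|)`!%:R * ((m - #|S| - 1)`!)%:R / (m`!)%:R) * (v (finset.setU [set i] S) - v S).

(* Main.v *)
Require Import Defs.
From mathcomp Require Import all_boot all_order all_algebra.
From mathcomp Require Import all_classical all_reals all_analysis.
From mathcomp Require Import ring.
Import Order.TTheory GRing.Theory Num.Theory.
Local Open Scope ring_scope.

Lemma det_rank1 (R : comRingType) n (a : R) :
  \det (1%:M + (const_mx a : 'M[R]_(n,1)) *m (const_mx 1 : 'M[R]_(1,n))) = 1 + a * n%:R.
Proof.
set A : 'M[R]_(n,1) := const_mx a; set B : 'M[R]_(1,n) := const_mx 1.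
have E1 : block_mx 1%:M (- B) A 1%:M
   = block_mx 1%:M 0 A 1%:M *m block_mx 1%:M (-B) 0 (1%:M + A *m B).
  rewrite mulmx_block !mul1mx !mul0mx ?mulmx0 ?addr0 ?add0r mulmxN.
  by rewrite mulmx1 [- _ + _]addrC addrK.
have E2 : block_mx 1%:M (- B) A 1%:M
   = block_mx (1%:M + B *m A) (-B) 0 1%:M *m block_mx 1%:M 0 A 1%:M.
  rewrite mulmx_block !mul1mx !mul0mx ?mulmx0 ?addr0 ?add0r mulNmx.
  by rewrite !mulmx1 addrK.
have := congr1 determinant E2; rewrite {1}E1 !det_mulmx ?det_lblock ?det_ublock.
rewrite !det1 !mul1r !mulr1  => ->.
rewrite det_mx11 !mxE /= mulr1n.
congr (_ + _); rewrite (eq_bigr (fun _ => a)); last by move=> j _; rewrite !mxE mul1r.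
by rewrite sumr_const card_ord mulr_natr.
Qed.

Lemma tv_const (R : realType) d m (eta : R) (u : 'rV[R]_d) (S : {set 'I_m}) :
  team_value eta (fun _ => u) S = ln (1 + eta * sqnorm u * #|S|%:R).
Proof.
rewrite /team_value; case: eqP => [->|_]; first by rewrite mulr0 addr0 ln1.
have -> : 1%:M + eta *: gramS (fun _ => u) S
   = 1%:M + (const_mx (eta * sqnorm u) : 'M[R]_(#|S|,1)) *m (const_mx 1 : 'M[R]_(1,#|S|)).
  apply/matrixP => j k; rewrite !mxE big_ord1 !mxE mulr1.
  by rewrite /sqnorm.
by rewrite det_rank1.
Qed.

Theorem theorem2 (R : realType) (d m : nat) (eta : R) (u : 'rV[R]_d)
  (r : 'I_m -> R) (zbar : 'I_m -> 'rV[R]_d) :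
  0 < eta -> (0 < m)%N ->
  (forall i, r i = 1) ->
  (forall i, r i *: zbar i = u) ->
  forall i : 'I_m,
    shapley (team_value eta (fun j => r j *: zbar j)) i
    = m%:R^-1 * ln (1 + eta * m%:R * sqnorm u).
Proof.
move=> eta0 m0 r1 rz i.
have -> : (fun j => r j *: zbar j) = (fun _ => u) by apply/funext.
case: m m0 r zbar r1 rz i => [//|n] _ r zbar _ _ i.
rewrite /shapley.
set f := fun k : nat => ln (1 + eta * sqnorm u * k%:R).
set F := fun k : nat => ((k`!)%:R * ((n.+1 - k - 1)`!)%:R / ((n.+1)`!)%:R) * (f k.+1 - f k) : R.
have -> : \sum_(S : {set 'I_n.+1} | i \notin S)
    ((#|S|)`!%:R * ((n.+1 - #|S| - 1)`!)%:R / ((n.+1)`!)%:R) *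
      (team_value eta (fun=> u) (finset.setU [set i] S) - team_value eta (fun=> u) S)
   = \sum_(S : {set 'I_n.+1} | i \notin S) F #|S|.
  apply: eq_bigr => S iS; rewrite !tv_const cardsU1 iS /=.
  by rewrite /F /f add1n.
have cardS (S : {set 'I_n.+1}) : i \notin S -> (#|S| <= n)%N.
  move=> iS; have : S \subset [set~ i] by rewrite finset.subsetC finset.sub1set inE.
  by move/subset_leq_card; rewrite cardsC1 card_ord.
rewrite (partition_big (fun S : {set 'I_n.+1} => (inord #|S| : 'I_n.+1)) predT) //=.
have inner (j : 'I_n.+1) :
   \sum_(S : {set 'I_n.+1} | (i \notin S) && (inord #|S| == j)) F #|S|
   = F j *+ 'C(n, j).
  have -> : 'C(n, j) = #|[set S : {set 'I_n.+1} | S \subset [set~ i] & #|S| == j]|.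
    by rewrite cards_draws cardsC1 card_ord.
  rewrite -sumr_const; apply: eq_big => S.
    rewrite !inE finset.subsetC finset.sub1set inE; case iS: (i \notin S) => //=.
    have hS : (#|S| < n.+1)%N by rewrite ltnS cardS ?iS.
    apply/eqP/eqP => [<-|E]; first by rewrite inordK.
    by apply/val_inj; rewrite /= inordK.
  move=> /andP[iS /eqP <-]; have hS : (#|S| < n.+1)%N by rewrite ltnS cardS.
  by rewrite inordK.
under eq_bigr => j _ do rewrite inner.
have Fj (j : 'I_n.+1) : F j *+ 'C(n, j) = n.+1%:R^-1 * (f j.+1 - f j).
  have jn : (j <= n)%N by rewrite -ltnS ltn_ord.
  have key : ((j`! * (n.+1 - j - 1)`!) * 'C(n,j))%:R / ((n.+1)`!)%:R = n.+1%:R^-1 :> R.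
    have -> : (n.+1 - j - 1 = n - j)%N by rewrite subn1 subSn.
    rewrite mulnC bin_fact // factS natrM invfM mulrA mulrC mulrA mulVf ?mul1r //.
  rewrite /F -mulr_natr -key !natrM.
  ring.
under eq_bigr => j _ do rewrite Fj.
rewrite -mulr_sumr; congr (_ * _).
rewrite -(big_mkord xpredT (fun j => f j.+1 - f j)) telescope_sumr //.
by rewrite /f mulr0 addr0 ln1 subr0 mulrAC.
Qed.
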